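(* Let $c<d$ be real numbers and $\Lambda$ a closed interval of $\mathbb{R}$. Let $f\colon[c,d]\times\Lambda\to(0,\infty)$ be jointly continuous with $\partial f/\partial\lambda$ jointly continuous, and assume $\frac{\partial f}{\partial\lambda}(x,\lambda)=f(x,\lambda)g(x,\lambda)$ where, for each $\lambda\in\Lambda$, $g(\cdot,\lambda)$ is strictly increasing (respectively strictly decreasing) in $x$. Then $$h(x,\lambda)=\frac{\int_x^d f(y,\lambda)\,dy}{\int_c^x f(y,\lambda)\,dy}$$ is a strictly increasing (respectively strictly decreasing) function of $\lambda\in\Lambda$ for every $x\in(c,d)$. *)

(* Defs.v *)
From Stdlib Require Import Reals.
From Coquelicot Require Import Coquelicot.
Open Scope R_scope.

Definition closed_interval (L : R -> Prop) : Prop :=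
  (forall a b e, L a -> L e -> a <= b <= e -> L b) /\ closed L.

Definition continuous_on2 (S : R * R -> Prop) (F : R * R -> R) : Prop :=
  forall p, S p -> filterlim F (within S (locally p)) (locally (F p)).

(* phi has derivative d at l relative to the set D (one-sided at endpoints). *)
Definition is_derive_within (D : R -> Prop) (phi : R -> R) (l d : R) : Prop :=
  filterlim (fun mu => (phi mu - phi l) / (mu - l))
    (within (fun mu => D mu /\ mu <> l) (locally l)) (locally d).

Definition rect (c d : R) (L : R -> Prop) (p : R * R) : Prop :=
  c <= fst p <= d /\ L (snd p).

Definition hratio (f : R -> R -> R) (c d x lam : R) : R :=
  RInt (fun y => f y lam) x d / RInt (fun y => f y lam) c x.

(* Main.v *)
Require Import Defs.
From Stdlib Require Import Reals Lra Psatz.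
From Coquelicot Require Import Coquelicot.
Open Scope R_scope.

Definition clamp (a b t : R) := Rmax a (Rmin b t).

Lemma clamp_in a b t : a <= b -> a <= clamp a b t <= b.
Proof. intros; unfold clamp, Rmax, Rmin; repeat destruct Rle_dec; lra. Qed.

Lemma clamp_id a b t : a <= t <= b -> clamp a b t = t.
Proof. intros; unfold clamp, Rmax, Rmin; repeat destruct Rle_dec; lra. Qed.

Lemma clamp_lip a b u t : a <= b -> Rabs (clamp a b u - clamp a b t) <= Rabs (u - t).
Proof. intros; unfold clamp, Rmax, Rmin; repeat destruct Rle_dec; split_Rabs; lra. Qed.

Lemma ballR x e y : ball x e y <-> Rabs (y - x) < e.
Proof. reflexivity. Qed.

Lemma cont_clamp a b k : a <= b ->
  (forall t, a<=t<=b -> forall eps, 0<eps -> exists delta, 0<delta /\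
     forall u, a<=u<=b -> Rabs (u-t) < delta -> Rabs (k u - k t) < eps) ->
  forall t, continuity_pt (fun u => k (clamp a b u)) t.
Proof.
  intros Hab H t.
  unfold continuity_pt, continue_in, limit1_in, limit_in; simpl; unfold R_dist.
  intros eps Heps.
  destruct (H (clamp a b t) (clamp_in a b t Hab) eps Heps) as [dl [Hdl Hd]].
  exists dl; split; [lra|].
  intros x [_ Hx].
  apply Hd. apply clamp_in; lra.
  eapply Rle_lt_trans; [apply clamp_lip; lra| lra].
Qed.

Lemma on2_eps S F p : continuous_on2 S F -> S p -> forall eps, 0 < eps ->
  exists delta, 0 < delta /\ forall q, S q -> Rabs (fst q - fst p) < delta ->
    Rabs (snd q - snd p) < delta -> Rabs (F q - F p) < eps.
Proof.
  intros HF Sp eps Heps.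
  specialize (HF p Sp (ball (F p) eps) (locally_ball (F p) (mkposreal eps Heps))).
  destruct HF as [dl Hd].
  exists dl; split; [apply cond_pos|].
  intros q Sq H1 H2. destruct q as [q1 q2], p as [p1 p2].
  apply Hd; [split; simpl; apply ballR; assumption | assumption].
Qed.

Lemma within_deriv_int (D : R -> Prop) phi l1 l2 t dv :
  (forall u, l1 <= u <= l2 -> D u) -> l1 < t < l2 ->
  is_derive_within D phi t dv -> derivable_pt_lim phi t dv.
Proof.
  intros HD Ht Hw eps Heps.
  specialize (Hw (ball dv eps) (locally_ball dv (mkposreal eps Heps))).
  destruct Hw as [dl Hd].
  assert (Hp : 0 < Rmin dl (Rmin (t - l1) (l2 - t))).
  { apply Rmin_pos; [apply cond_pos| apply Rmin_pos; lra]. }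
  exists (mkposreal _ Hp). simpl. intros h Hh0 Hh.
  assert (B := Rmin_l dl (Rmin (t - l1) (l2 - t))).
  assert (B1 := Rmin_r dl (Rmin (t - l1) (l2 - t))).
  assert (B2 := Rmin_l (t - l1) (l2 - t)).
  assert (B3 := Rmin_r (t - l1) (l2 - t)).
  assert (E := Hd (t + h)). apply ballR in E.
  - replace (t + h - t) with h in E by ring. exact E.
  - apply ballR. replace (t + h - t) with h by ring. lra.
  - split. apply HD. split_Rabs; lra. lra.
Qed.

Lemma incr_lemma a b k k' : a < b ->
  (forall t, a <= t <= b -> continuity_pt (fun u => k (clamp a b u)) t) ->
  (forall t, a < t < b -> derivable_pt_lim k t (k' t) /\ 0 < k' t) ->
  k a < k b.
Proof.
  intros Hab Hc Hd.
  set (K := fun u => k (clamp a b u)).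
  assert (HK : forall t, a < t < b -> derivable_pt_lim K t (k' t)).
  { intros t Ht eps Heps. destruct (proj1 (Hd t Ht) eps Heps) as [dl Hdl].
    assert (Hp : 0 < Rmin dl (Rmin (t - a) (b - t))).
    { apply Rmin_pos; [apply cond_pos| apply Rmin_pos; lra]. }
    exists (mkposreal _ Hp). simpl. intros h Hh0 Hh.
    assert (B := Rmin_l dl (Rmin (t - a) (b - t))).
    assert (B1 := Rmin_r dl (Rmin (t - a) (b - t))).
    assert (B2 := Rmin_l (t - a) (b - t)).
    assert (B3 := Rmin_r (t - a) (b - t)).
    unfold K. rewrite !clamp_id. apply Hdl; auto. lra. lra.
    split_Rabs; lra. }
  pose (pr1 := fun c (P : a < c < b) => exist (fun l => derivable_pt_lim K c l) (k' c) (HK c P)).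
  destruct (MVT K id a b pr1 (fun c _ => derivable_pt_id c) Hab Hc
     (fun c _ => derivable_continuous_pt _ _ (derivable_pt_id c))) as [c0 [P E]].
  rewrite derive_pt_id in E. simpl in E. unfold id in E.
  assert (Hk := proj2 (Hd c0 P)).
  unfold K in E. rewrite !clamp_id in E by lra.
  nra.
Qed.

Section S.
Variables (c d : R) (Lam : R -> Prop) (f df g : R -> R -> R).
Hypothesis Hcd : c < d.
Hypothesis HLam : closed_interval Lam.
Hypothesis Hpos : forall x lam, c <= x <= d -> Lam lam -> 0 < f x lam.
Hypothesis Hfc : continuous_on2 (rect c d Lam) (fun p => f (fst p) (snd p)).
Hypothesis Hder : forall x lam, c <= x <= d -> Lam lam ->
            is_derive_within Lam (fun mu => f x mu) lam (df x lam).
Hypothesis Hfg : forall x lam, c <= x <= d -> Lam lam -> df x lam = f x lam * g x lam.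

Lemma cont_lam y l1 l2 : c <= y <= d -> l1 <= l2 -> (forall u, l1 <= u <= l2 -> Lam u) ->
  forall t, continuity_pt (fun u => f y (clamp l1 l2 u)) t.
Proof.
  intros Hy Hl HL. apply (cont_clamp l1 l2 (fun u => f y u) Hl).
  intros t Ht eps Heps.
  destruct (on2_eps _ _ (y, t) Hfc (conj Hy (HL t Ht)) eps Heps) as [dl [Hdl H]].
  exists dl; split; auto. intros u Hu Hut.
  apply (H (y, u)); simpl. split; simpl; auto. rewrite Rminus_eq_0, Rabs_R0; auto. auto.
Qed.

Lemma cont_y lam : Lam lam ->
  forall t, continuous (fun y => f (clamp c d y) lam) t.
Proof.
  intros Hl t. apply continuity_pt_filterlim.
  apply (cont_clamp c d (fun y => f y lam) (Rlt_le _ _ Hcd)).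
  intros y Hy eps Heps.
  destruct (on2_eps _ _ (y, lam) Hfc (conj Hy Hl) eps Heps) as [dl [Hdl H]].
  exists dl; split; auto. intros u Hu Hut.
  apply (H (u, lam)); simpl. split; simpl; auto. auto. rewrite Rminus_eq_0, Rabs_R0; auto.
Qed.

Lemma ratio_lemma y z l1 l2 : c <= y <= d -> c <= z <= d -> Lam l1 -> Lam l2 -> l1 < l2 ->
  (forall mu, l1 < mu < l2 -> g z mu < g y mu) ->
  f y l1 * f z l2 < f y l2 * f z l1.
Proof.
  intros Hy Hz H1 H2 Hl Hg.
  assert (HL : forall u, l1 <= u <= l2 -> Lam u).
  { intros u Hu. destruct HLam as [Hc _]. exact (Hc l1 u l2 H1 H2 Hu). }
  set (k := fun mu => f y mu / f z mu).
  assert (Hk : k l1 < k l2).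
  { apply (incr_lemma l1 l2 _
      (fun mu => (df y mu * f z mu - df z mu * f y mu) / (f z mu)²) Hl).
    - intros t Ht. 
      apply (continuity_pt_div (fun u => f y (clamp l1 l2 u)) (fun u => f z (clamp l1 l2 u))).
      + apply cont_lam; auto; lra.
      + apply cont_lam; auto; lra.
      + apply Rgt_not_eq, Hpos; auto. apply HL, clamp_in; lra.
    - intros t Ht. split.
      + apply (derivable_pt_lim_div (fun mu => f y mu) (fun mu => f z mu)).
        * apply (within_deriv_int Lam (fun mu => f y mu) l1 l2 t (df y t)); auto; apply Hder; auto; apply HL; lra.
        * apply (within_deriv_int Lam (fun mu => f z mu) l1 l2 t (df z t)); auto; apply Hder; auto; apply HL; lra.
        * apply Rgt_not_eq, Hpos; auto. apply HL; lra.
      + assert (Lt : Lam t) by (apply HL; lra).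
        rewrite !Hfg by auto.
        assert (A1 := Hpos y t Hy Lt). assert (A2 := Hpos z t Hz Lt).
        assert (G := Hg t Ht).
        replace ((f y t * g y t * f z t - f z t * g z t * f y t) / (f z t)²)
          with ((f y t * f z t) * (g y t - g z t) * / (f z t)²) by (unfold Rsqr; field; lra).
        apply Rmult_lt_0_compat. apply Rmult_lt_0_compat. nra. lra.
        apply Rinv_0_lt_compat. unfold Rsqr; nra. }
  unfold k in Hk.
  assert (A1 := Hpos y l1 Hy H1). assert (A2 := Hpos z l1 Hz H1).
  assert (A3 := Hpos y l2 Hy H2). assert (A4 := Hpos z l2 Hz H2).
  apply (Rmult_lt_compat_r (f z l1 * f z l2)) in Hk; [|nra].
  replace (f y l1 / f z l1 * (f z l1 * f z l2)) with (f y l1 * f z l2) in Hk by (field; lra).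
  replace (f y l2 / f z l2 * (f z l1 * f z l2)) with (f y l2 * f z l1) in Hk by (field; lra).
  exact Hk.
Qed.
End S.

Lemma RInt_clamp c d (p : R -> R) a b : c <= a -> a <= b -> b <= d ->
  RInt p a b = RInt (fun y => p (clamp c d y)) a b.
Proof.
  intros. apply RInt_ext. intros y Hy. rewrite Rmin_left, Rmax_right in Hy by lra.
  rewrite clamp_id; auto; lra.
Qed.

Lemma RInt_mulc (P : R -> R) rho a b : (forall t, continuous P t) ->
  RInt (fun y => rho * P y) a b = rho * RInt P a b.
Proof.
  intros HP. apply (RInt_scal (V := R_CompleteNormedModule) P a b rho).
  apply ex_RInt_continuous. intros; apply HP.
Qed.

Lemma core c d x p s : c < x < d ->
 (forall y, c<=y<=d -> 0 < p y) -> (forall y, c<=y<=d -> 0 < s y) ->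
 (forall t, continuous (fun y => p (clamp c d y)) t) ->
 (forall t, continuous (fun y => s (clamp c d y)) t) ->
 (forall y1 y2, c<=y1 -> y1<y2 -> y2<=d -> s y1 * p y2 < s y2 * p y1) ->
 RInt p x d / RInt p c x < RInt s x d / RInt s c x.
Proof.
  intros Hx Hp Hs Cp Cs Hm.
  rewrite !(RInt_clamp c d p), !(RInt_clamp c d s) by lra.
  set (P := fun y => p (clamp c d y)) in *.
  set (S := fun y => s (clamp c d y)) in *.
  assert (Px : 0 < p x) by (apply Hp; lra).
  assert (Sx : 0 < s x) by (apply Hs; lra).
  set (rho := s x / p x).
  assert (Cr : forall t, continuous (fun y => rho * P y) t).
  { intros t. apply (continuous_mult (fun _ => rho) P). apply continuous_const. apply Cp. }
  assert (HP : forall y, 0 < P y). { intros; apply Hp, clamp_in; lra. }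
  assert (HS : forall y, 0 < S y). { intros; apply Hs, clamp_in; lra. }
  assert (P1 : 0 < RInt P c x). { apply RInt_gt_0; auto; lra. }
  assert (P2 : 0 < RInt P x d). { apply RInt_gt_0; auto; lra. }
  assert (S1 : 0 < RInt S c x). { apply RInt_gt_0; auto; lra. }
  assert (S2 : 0 < RInt S x d). { apply RInt_gt_0; auto; lra. }
  assert (I1 : RInt S c x < rho * RInt P c x).
  { rewrite <- RInt_mulc by auto. apply RInt_lt; auto; try lra.
    intros y Hy. unfold S, P, rho. rewrite clamp_id by lra.
    assert (py : 0 < p y) by (apply Hp; lra).
    assert (H := Hm y x ltac:(lra) ltac:(lra) ltac:(lra)).
    apply (Rmult_lt_reg_r (p x)); auto.
    replace (s x / p x * p y * p x) with (s x * p y) by (field; lra). lra. }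
  assert (I2 : rho * RInt P x d < RInt S x d).
  { rewrite <- RInt_mulc by auto. apply RInt_lt; auto; try lra.
    intros y Hy. unfold S, P, rho. rewrite clamp_id by lra.
    assert (py : 0 < p y) by (apply Hp; lra).
    assert (H := Hm x y ltac:(lra) ltac:(lra) ltac:(lra)).
    apply (Rmult_lt_reg_r (p x)); auto.
    replace (s x / p x * p y * p x) with (s x * p y) by (field; lra). lra. }
  assert (rp : 0 < rho) by (unfold rho; apply Rdiv_lt_0_compat; auto).
  apply (Rmult_lt_reg_r (RInt P c x * RInt S c x)). nra.
  replace (RInt P x d / RInt P c x * (RInt P c x * RInt S c x)) with (RInt P x d * RInt S c x) by (field; lra).
  replace (RInt S x d / RInt S c x * (RInt P c x * RInt S c x)) with (RInt S x d * RInt P c x) by (field; lra).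
  nra.
Qed.

Theorem lemmaC1 (c d : R) (Lam : R -> Prop) (f df g : R -> R -> R)
  (Hcd : c < d)
  (HLam : closed_interval Lam)
  (Hpos : forall x lam, c <= x <= d -> Lam lam -> 0 < f x lam)
  (Hfc : continuous_on2 (rect c d Lam) (fun p => f (fst p) (snd p)))
  (Hder : forall x lam, c <= x <= d -> Lam lam ->
            is_derive_within Lam (fun mu => f x mu) lam (df x lam))
  (Hdfc : continuous_on2 (rect c d Lam) (fun p => df (fst p) (snd p)))
  (Hfg : forall x lam, c <= x <= d -> Lam lam -> df x lam = f x lam * g x lam) :
  ((forall lam, Lam lam -> forall x1 x2, c <= x1 -> x1 < x2 -> x2 <= d ->
       g x1 lam < g x2 lam) ->
   forall x, c < x < d -> forall l1 l2, Lam l1 -> Lam l2 -> l1 < l2 ->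
       hratio f c d x l1 < hratio f c d x l2)
  /\
  ((forall lam, Lam lam -> forall x1 x2, c <= x1 -> x1 < x2 -> x2 <= d ->
       g x2 lam < g x1 lam) ->
   forall x, c < x < d -> forall l1 l2, Lam l1 -> Lam l2 -> l1 < l2 ->
       hratio f c d x l2 < hratio f c d x l1).

Proof.
  assert (Hfc' := Hfc). 
  split.
  - intros Hg x Hx l1 l2 L1 L2 Hl. unfold hratio.
    apply (core c d x (fun y => f y l1) (fun y => f y l2)); [exact Hx| | | | | ].
    + intros; apply Hpos; auto.
    + intros; apply Hpos; auto.
    + apply (cont_y c d Lam f Hcd Hfc); auto.
    + apply (cont_y c d Lam f Hcd Hfc); auto.
    + intros y1 y2 Y1 Y12 Y2.
      assert (R := ratio_lemma c d Lam f df g HLam Hpos Hfc Hder Hfg y2 y1 l1 l2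
        ltac:(lra) ltac:(lra) L1 L2 Hl).
      assert (Hr : forall mu, l1 < mu < l2 -> g y1 mu < g y2 mu).
      { intros mu Hmu. apply Hg; auto. destruct HLam as [Hc _]. apply (Hc l1 mu l2); auto; lra. }
      specialize (R Hr). nra.
  - intros Hg x Hx l1 l2 L1 L2 Hl. unfold hratio.
    apply (core c d x (fun y => f y l2) (fun y => f y l1)); [exact Hx| | | | | ].
    + intros; apply Hpos; auto.
    + intros; apply Hpos; auto.
    + apply (cont_y c d Lam f Hcd Hfc); auto.
    + apply (cont_y c d Lam f Hcd Hfc); auto.
    + intros y1 y2 Y1 Y12 Y2.
      assert (R := ratio_lemma c d Lam f df g HLam Hpos Hfc Hder Hfg y1 y2 l1 l2
        ltac:(lra) ltac:(lra) L1 L2 Hl).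
      assert (Hr : forall mu, l1 < mu < l2 -> g y2 mu < g y1 mu).
      { intros mu Hmu. apply Hg; auto. destruct HLam as [Hc _]. apply (Hc l1 mu l2); auto; lra. }
      specialize (R Hr). nra.
Qed.
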